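(* There exist universal constants $c,c'>0$ such that for all integers $d\ge1$ and $k$ with $d$ dividing $k-1$, the Octopus graph $G_{k,d}$ satisfies $c/d^2\le\lambda_2\le c'/d^2$, where $\lambda_2$ is the second-smallest eigenvalue of its Laplacian; i.e. $\lambda_2=\Theta(1/d^2)$.
   Context: Octopus graph $G_{k,d}$: for nodes $i<j$ in $\{1,\dots,k\}$, $\{i,j\}$ is an edge iff either ($j=k$ and $i\equiv1\pmod d$) or ($j\ne k$, $j=i+1$ and $i\not\equiv0\pmod d$). Thus node $k$ is a centre from which $(k-1)/d$ paths of $d$ nodes each emanate. The Laplacian has diagonal entries equal to degrees and $-1$ for adjacent pairs, $0$ otherwise. *)

(* Defs.v *)
From HB Require Import structures.
From mathcomp Require Import all_boot all_order all_algebra.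
From mathcomp Require Import reals.
Set Implicit Arguments. Unset Strict Implicit. Unset Printing Implicit Defensive.
Import Order.TTheory GRing.Theory Num.Theory.
Local Open Scope ring_scope.

(* Edge condition of the Octopus graph G_{k,d} on nodes 1..k, for a < b
   (1-based labels): {a,b} is an edge iff
   (b = k and a = 1 mod d) or (b <> k, b = a+1 and a <> 0 mod d). *)
Definition octo_cond (k d a b : nat) : bool :=
  ((b == k) && (a %% d == 1 %% d)%N) ||
  ((b != k) && (b == a.+1) && (a %% d != 0)%N).

Definition octo_adj (k d : nat) (i j : 'I_k) : bool :=
  let a := i.+1 in let b := j.+1 in
  ((a < b)%N && octo_cond k d a b) || ((b < a)%N && octo_cond k d b a).

Arguments octo_adj : clear implicits.
Definition octo_deg (k d : nat) (i : 'I_k) : nat := #|[set j | octo_adj k d i j]|.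

Arguments octo_deg : clear implicits.
Definition octo_laplacian (R : nzRingType) (k d : nat) : 'M[R]_k :=
  \matrix_(i, j) (if i == j then (octo_deg k d i)%:R
                  else if octo_adj k d i j then -1 else 0).

Definition sorted_spectrum (R : numFieldType) (n : nat) (A : 'M[R]_n)
  (s : seq R) : Prop :=
  sorted <=%R s /\ char_poly A = \prod_(x <- s) ('X - x%:P).

(* Main.v *)
Require Import Defs.
From HB Require Import structures.
From mathcomp Require Import all_boot all_order all_algebra.
From mathcomp Require Import reals complex.
From mathcomp Require Import ring lra zify.
Import Order.TTheory GRing.Theory Num.Theory.
Set Implicit Arguments. Unset Strict Implicit. Unset Printing Implicit Defensive.
Definition parn (k' d i : nat) : nat := if i %% d == 0 then k' else i.-1.

Lemma mod_succ1 d i : (i.+1 %% d == 1 %% d) = (i %% d == 0).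
Proof. by rewrite -addn1 -(add0n 1) eqn_modDr mod0n. Qed.

Lemma adj_lt k' d i j : (0 < d) -> (i < j) -> (j <= k') ->
  octo_cond k'.+1 d i.+1 j.+1 =
  ((i < k') && (j == parn k' d i)) || ((j < k') && (i == parn k' d j)).
Proof.
move=> d0 ij jk; rewrite /octo_cond /parn !eqSS mod_succ1.
have i0 : i %% d != 0 -> 0 < i by case: i {ij} => //; rewrite mod0n.
have [ej|nej] := eqVneq j i.+1.
  rewrite ej.
  move: i0; case: (i %% d == 0); case: (i.+1 %% d == 0) => /= i0; lia.
move: i0; case: (i %% d == 0); case: (j %% d == 0) => /= i0; lia.
Qed.

Lemma octo_adj_char k' d (i j : 'I_k'.+1) : 0 < d ->
  octo_adj k'.+1 d i j =
  ((i < k') && (val j == parn k' d i)) || ((j < k') && (val i == parn k' d j)).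
Proof.
move=> d0; rewrite /octo_adj /=.
have := ltn_ord i; have := ltn_ord j; rewrite !ltnS => jk ik.
case: (ltngtP i j) => h.
- by rewrite (adj_lt d0 h jk) /= orbF.
- by rewrite (adj_lt d0 h ik) /= orbC.
- rewrite h /= /parn.
  have i0 : j %% d != 0 -> 0 < j by case: (val j) => //; rewrite mod0n.
  move: i0; case: (j %% d == 0) => /= i0; lia.
Qed.

Local Open Scope ring_scope.

Lemma char_poly_similar (F : comUnitRingType) n (Q P D : 'M[F]_n) :
  Q *m P = 1%:M -> char_poly (Q *m D *m P) = char_poly D.
Proof.
move=> QP.
rewrite /char_poly /char_poly_mx.
have eX : ('X%:M : 'M[{poly F}]_n) = map_mx (@polyC F) Q *m 'X%:M *m map_mx (@polyC F) P.
  by rewrite scalar_mxC -mulmxA -map_mxM QP map_mx1 mulmx1.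
rewrite !map_mxM {1}eX -mulmxBl -mulmxBr !det_mulmx mulrAC -det_mulmx.
by rewrite -map_mxM QP map_mx1 det1 mul1r.
Qed.

Section Spec.
Variable R : realType.
Local Notation C := (R[i]).
Local Notation toC := (real_complex R).
Local Open Scope sesquilinear_scope.

Lemma spec_real n (A : 'M[R]_n) : A^T = A ->
  exists (dl : 'I_n -> R) (P : 'M[C]_n),
   P *m P^t* = 1%:M /\
   map_mx toC A = P^t* *m diag_mx (\row_i toC (dl i)) *m P.
Proof.
move=> As.
set AC := map_mx toC A.
have ACsym : AC \is symmetricmx.
  apply/is_hermitianmxP; rewrite expr0 scale1r map_mx_id //.
  by rewrite /AC map_trmx As.
have ACreal : AC \is a realmx.
  apply/mxOverP => i j; rewrite mxE.
  by apply/complex_realP; eexists.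
have ACh := realsym_hermsym ACsym ACreal.
have /orthomx_spectralP ACe := hermitian_normalmx ACh.
have Pu := spectral_unitarymx AC.
have spr := hermitian_spectral_diag_real ACh.
exists (fun i => complex.Re (spectral_diag AC 0 i)), (spectralmx AC); split.
  exact/unitarymxP.
rewrite -invmx_unitary //.
have -> : \row_i toC (complex.Re (spectral_diag AC 0 i)) = spectral_diag AC.
  apply/rowP => i; rewrite mxE RRe_real //.
  by move/mxOverP: spr; apply.
exact: ACe.
Qed.


Local Notation cRe := (@complex.Re R).
Local Notation cIm := (@complex.Im R).

Lemma ReM3 (x y : C) (a : R) :
  cRe (x * toC a * Num.conj y) = a * (cRe x * cRe y + cIm x * cIm y).
Proof. case: x => xr xi; case: y => yr yi; rewrite /=; ring. Qed.

Lemma ReM2 (x y : C) :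
  cRe (x * Num.conj y) = cRe x * cRe y + cIm x * cIm y.
Proof. case: x => xr xi; case: y => yr yi; rewrite /=; ring. Qed.

Lemma ReD (x y : C) : cRe (x + y) = cRe x + cRe y.
Proof. by case: x; case: y. Qed.

Lemma Re_sum I (r : seq I) (P : pred I) (F : I -> C) :
  cRe (\sum_(i <- r | P i) F i) = \sum_(i <- r | P i) cRe (F i).
Proof. by apply: (big_morph _ ReD). Qed.

Lemma ImD (x y : C) : cIm (x + y) = cIm x + cIm y.
Proof. by case: x; case: y. Qed.

Lemma Im_sum I (r : seq I) (P : pred I) (F : I -> C) :
  cIm (\sum_(i <- r | P i) F i) = \sum_(i <- r | P i) cIm (F i).
Proof. by apply: (big_morph _ ImD). Qed.

Lemma char_real n (A : 'M[R]_n) (dl : 'I_n -> R) (P : 'M[C]_n) :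
   P *m P^t* = 1%:M ->
   map_mx toC A = P^t* *m diag_mx (\row_i toC (dl i)) *m P ->
   char_poly A = \prod_(i < n) ('X - (dl i)%:P).
Proof.
move=> hP hA.
apply: (@map_poly_inj _ _ toC).
rewrite map_char_poly hA char_poly_similar; last exact: mulmx1C.
rewrite char_poly_trig ?diag_mx_is_trig // rmorph_prod.
by apply: eq_bigr => i _; rewrite rmorphB /= map_polyX map_polyC !mxE eqxx mulr1n.
Qed.

Lemma rayleigh n (A : 'M[R]_n) (dl : 'I_n -> R) (P : 'M[C]_n) :
   P *m P^t* = 1%:M ->
   map_mx toC A = P^t* *m diag_mx (\row_i toC (dl i)) *m P ->
   forall u : 'rV[C]_n,
   \sum_i \sum_j (cRe (u 0 i) * A i j * cRe (u 0 j) + cIm (u 0 i) * A i j * cIm (u 0 j))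
     = \sum_i dl i * (cRe ((u *m P^t*) 0 i) ^+ 2 + cIm ((u *m P^t*) 0 i) ^+ 2)
   /\ \sum_i (cRe (u 0 i) ^+ 2 + cIm (u 0 i) ^+ 2)
     = \sum_i (cRe ((u *m P^t*) 0 i) ^+ 2 + cIm ((u *m P^t*) 0 i) ^+ 2).
Proof.
move=> hP hA u.
have hP' : P^t* *m P = 1%:M by exact: mulmx1C.
set w := u *m P^t*.
have wt : w^t* = P *m u^t* by rewrite /w trmx_mul map_mxM trmxCK.
have e1 : u *m map_mx toC A *m u^t* = w *m diag_mx (\row_i toC (dl i)) *m w^t*.
  by rewrite hA wt /w !mulmxA.
have e2 : u *m u^t* = w *m w^t*.
  by rewrite wt /w !mulmxA -(mulmxA u) hP' mulmx1.
have L1 : cRe ((u *m map_mx toC A *m u^t*) 0 0) =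
  \sum_i \sum_j (cRe (u 0 i) * A i j * cRe (u 0 j) + cIm (u 0 i) * A i j * cIm (u 0 j)).
  rewrite mxE Re_sum.
  under eq_bigr => j _ do rewrite !mxE mulr_suml Re_sum.
  rewrite exchange_big /=.
  apply: eq_bigr => i _; apply: eq_bigr => j _.
  rewrite !mxE ReM3. ring.
have L2 : cRe ((w *m diag_mx (\row_i toC (dl i)) *m w^t*) 0 0) =
  \sum_i dl i * (cRe (w 0 i) ^+ 2 + cIm (w 0 i) ^+ 2).
  rewrite mxE Re_sum; apply: eq_bigr => i _.
  rewrite mul_mx_diag !mxE ReM3. ring.
have L3 : forall v : 'rV[C]_n, cRe ((v *m v^t*) 0 0) =
  \sum_i (cRe (v 0 i) ^+ 2 + cIm (v 0 i) ^+ 2).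
  move=> v; rewrite mxE Re_sum; apply: eq_bigr => i _.
  rewrite !mxE ReM2. ring.
split.
  by rewrite -L1 e1 L2.
by rewrite -L3 e2 L3.
Qed.


Lemma count_ord n (P : pred 'I_n) : count P (enum 'I_n) = #|P|.
Proof.
by rewrite cardE /enum_mem size_filter count_filter; apply: eq_count => x; rewrite !inE andbT.
Qed.

Lemma perm_facts n (dl : 'I_n -> R) (s : seq R) :
  sorted <=%R s -> perm_eq s (map dl (enum 'I_n)) -> (1 < n)%N ->
  (exists i0 i1, [/\ i0 != i1, dl i0 <= s`_1 & dl i1 <= s`_1]) /\
  (exists i0, forall i, i != i0 -> s`_1 <= dl i).
Proof.
move=> so pe n2.
have sz : size s = n by rewrite (perm_size pe) size_map size_enum_ord.
case: s so pe sz => [|a [|b t]] so pe sz; try by rewrite -sz in n2.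
move: so => /= /andP [ab pb].
have allb := order_path_min le_trans pb.
have cnt := permP pe.
have ct : forall P : pred R, count P (a :: b :: t) = #|[pred i | P (dl i)]|.
  by move=> P; rewrite cnt count_map count_ord.
split.
  have : (1 < #|[pred i | (dl i <= b)%R]|)%N.
    by rewrite -(ct (fun x => x <= b)) /= ab lexx.
  move/card_gt1P => [i0 [i1 [h0 h1 ne]]].
  by exists i0, i1; split.
have c0 : count (fun x => x < b) t = 0%N.
  apply/eqP; rewrite -leqn0 leqNgt -has_count; apply/hasPn => x xt.
  by rewrite -leNgt; apply: (allP allb).
case: (pickP [pred i | (dl i < b)%R]) => [i0 hi0 | none].
  exists i0 => i ne; rewrite leNgt; apply/negP => lt.
  have : (1 < #|[pred i | (dl i < b)%R]|)%N.
    by apply/card_gt1P; exists i, i0; split.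
  by rewrite -(ct (fun x => x < b)) /= c0 ltxx addn0 addn0; case: (a < b).
exists (Ordinal (ltnW n2)) => i _.
by rewrite leNgt; move: (none i) => /= ->.
Qed.


Definition nw (z : C) := cRe z ^+ 2 + cIm z ^+ 2.
Definition qf n (A : 'M[R]_n) (x : 'I_n -> R) := \sum_i \sum_j x i * A i j * x j.
Definition nf n (x : 'I_n -> R) := \sum_i x i ^+ 2.

Lemma nw_ge0 z : 0 <= nw z.
Proof. by rewrite /nw addr_ge0 // sqr_ge0. Qed.

Lemma nw_gt0 z : z != 0 -> 0 < nw z.
Proof.
case: z => x y nz; rewrite /nw /=.
have [x0|x0] := eqVneq x 0.
  have y0 : y != 0 by apply: contra nz => /eqP y0; rewrite x0 y0.
  by rewrite x0 expr0n /= add0r exprn_even_gt0 // y0 orbT.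
by apply: ltr_pwDl; rewrite ?sqr_ge0 // exprn_even_gt0 // x0 orbT.
Qed.

Lemma nw0 : nw 0 = 0.
Proof. by rewrite /nw /= expr0n /= addr0. Qed.

Lemma spec_perm n (A : 'M[R]_n) (dl : 'I_n -> R) (P : 'M[C]_n) s :
   P *m P^t* = 1%:M ->
   map_mx toC A = P^t* *m diag_mx (\row_i toC (dl i)) *m P ->
   char_poly A = \prod_(x <- s) ('X - x%:P) ->
   perm_eq s (map dl (enum 'I_n)).
Proof.
move=> hP hA hc; apply: prod_XsubC_eq.
by rewrite -hc (char_real hP hA) big_map big_enum.
Qed.

Lemma split_qf n (A : 'M[R]_n) (x y : 'I_n -> R) :
  \sum_i \sum_j (x i * A i j * x j + y i * A i j * y j) = qf A x + qf A y.
Proof.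
by rewrite /qf -big_split; apply: eq_bigr => i _; rewrite -big_split.
Qed.

Lemma split_nf n (x y : 'I_n -> R) :
  \sum_i (x i ^+ 2 + y i ^+ 2) = nf x + nf y.
Proof. by rewrite /nf -big_split. Qed.


Lemma lower_abstract n (A : 'M[R]_n) (s : seq R) (mu : R) :
  A^T = A -> (1 < n)%N -> sorted_spectrum A s ->
  (forall x : 'I_n -> R, \sum_i x i = 0 -> mu * nf x <= qf A x) -> mu <= s`_1.
Proof.
move=> As n2 [so hc] H.
have [dl [P [hP hA]]] := spec_real As.
have pe := spec_perm hP hA hc.
have [[i0 [i1 [ne h0 h1]]] _] := perm_facts so pe n2.
pose r i := \sum_j P i j.
pose a : C := if (r i0 == 0) && (r i1 == 0) then 1 else r i1.
pose b : C := if (r i0 == 0) && (r i1 == 0) then 0 else - r i0.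
pose w0 : 'rV[C]_n := \row_i (if i == i0 then a else if i == i1 then b else 0).
pose u := w0 *m P.
have wu : u *m P^t* = w0 by rewrite /u -mulmxA hP mulmx1.
have [e1 e2] := rayleigh hP hA u.
rewrite wu in e1 e2.
have ne' : i1 != i0 by rewrite eq_sym.
have uj : forall j, u 0 j = a * P i0 j + b * P i1 j.
  move=> j; rewrite !mxE (bigD1 i0) //= (bigD1 i1) //= big1 => [|i /andP [ni1 ni0]].
    by rewrite !mxE eqxx (negbTE ne') eqxx addr0.
  by rewrite mxE (negbTE ni0) (negbTE ni1) mul0r.
have su : \sum_j u 0 j = 0.
  under eq_bigr => j _ do rewrite uj.
  rewrite big_split /= -!mulr_sumr -/(r i0) -/(r i1) /a /b.
  case: ifP => [/andP [/eqP -> /eqP ->]|_]; ring.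
have Hx := H (fun i => cRe (u 0 i)).
have Hy := H (fun i => cIm (u 0 i)).
rewrite -Re_sum su /= in Hx; rewrite -Im_sum su /= in Hy.
have {Hx Hy} Hxy := lerD (Hx erefl) (Hy erefl).
rewrite -mulrDr -split_qf -split_nf e1 e2 in Hxy.
have nwi : forall i, i != i0 -> i != i1 -> nw (w0 0 i) = 0.
  by move=> i ni0 ni1; rewrite mxE (negbTE ni0) (negbTE ni1) nw0.
have le1 : \sum_i dl i * (cRe (w0 0 i) ^+ 2 + cIm (w0 0 i) ^+ 2)
        <= s`_1 * \sum_i (cRe (w0 0 i) ^+ 2 + cIm (w0 0 i) ^+ 2).
  rewrite mulr_sumr; apply: ler_sum => i _.
  have [->|ni0] := eqVneq i i0; first by rewrite ler_wpM2r // (nw_ge0 (w0 0 i0)).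
  have [->|ni1] := eqVneq i i1; first by rewrite ler_wpM2r // (nw_ge0 (w0 0 i1)).
  by have := nwi i ni0 ni1; rewrite /nw => ->; rewrite !mulr0.
have pos : 0 < \sum_i (cRe (w0 0 i) ^+ 2 + cIm (w0 0 i) ^+ 2).
  rewrite (bigD1 i0) //= (bigD1 i1) //= big1 => [|i /andP [ni1 ni0]]; last first.
    by have := nwi i ni1 ni0; rewrite /nw.
  rewrite addr0 -/(nw (w0 0 i0)) -/(nw (w0 0 i1)) !mxE eqxx (negbTE ne') eqxx.
  have [ab|ab] : a != 0 \/ b != 0.
    rewrite /a /b; case: ifP => [_|]; first by left; rewrite oner_neq0.
    have [->|r0] := eqVneq (r i0) 0; last by right; rewrite oppr_eq0.
    by move=> /= /negbT r1; left.
    by apply: (lt_le_trans (nw_gt0 ab)); rewrite lerDl nw_ge0.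
  by apply: (lt_le_trans (nw_gt0 ab)); rewrite lerDr nw_ge0.
by rewrite -(ler_pM2r pos); apply: le_trans le1.
Qed.


Lemma ReL (x y : C) (t : R) : cRe (x + y * toC t) = cRe x + cRe y * t.
Proof. case: x => ? ?; case: y => ? ? /=; ring. Qed.

Lemma ImL (x y : C) (t : R) : cIm (x + y * toC t) = cIm x + cIm y * t.
Proof. case: x => ? ?; case: y => ? ? /=; ring. Qed.

Lemma nf_aff n (f : 'I_n -> R) (a b : R) : \sum_i f i = 0 ->
  nf (fun i => a + b * f i) = n%:R * a ^+ 2 + b ^+ 2 * nf f.
Proof.
move=> sf; rewrite /nf.
have -> : \sum_i (a + b * f i) ^+ 2 =
          \sum_i (a ^+ 2 + (2 * a * b) * f i + b ^+ 2 * f i ^+ 2).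
  by apply: eq_bigr => i _; ring.
rewrite !big_split /= -!mulr_sumr sf sumr_const card_ord mulr0 addr0.
by rewrite -mulr_natl; ring.
Qed.

Lemma qf_ext n (A : 'M[R]_n) (x y : 'I_n -> R) : x =1 y -> qf A x = qf A y.
Proof.
by move=> e; apply: eq_bigr => i _; apply: eq_bigr => j _; rewrite !e.
Qed.

Lemma nf_ext n (x y : 'I_n -> R) : x =1 y -> nf x = nf y.
Proof. by move=> e; apply: eq_bigr => i _; rewrite e. Qed.

Lemma upper_abstract n (A : 'M[R]_n) (s : seq R) (f : 'I_n -> R) (cst : R) :
  A^T = A -> (1 < n)%N -> sorted_spectrum A s -> 0 <= cst ->
  \sum_i f i = 0 -> 0 < nf f -> qf A f <= cst * nf f ->
  (forall a b : R, qf A (fun i => a + b * f i) = b ^+ 2 * qf A f) ->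
  s`_1 <= cst.
Proof.
move=> As n2 [so hc] cst0 sf nfp qfb qaff.
have [dl [P [hP hA]]] := spec_real As.
have pe := spec_perm hP hA hc.
have [_ [i0 hi0]] := perm_facts so pe n2.
pose v1 := (const_mx 1 : 'rV[C]_n) *m P^t*.
pose fC := \row_j toC (f j).
pose vf := fC *m P^t*.
pose al : C := if (vf 0 i0 == 0) && (v1 0 i0 == 0) then 1 else vf 0 i0.
pose be : C := if (vf 0 i0 == 0) && (v1 0 i0 == 0) then 0 else - v1 0 i0.
pose u : 'rV[C]_n := \row_j (al + be * toC (f j)).
have ue : u = al *: (const_mx 1 : 'rV[C]_n) + be *: fC.
  by apply/rowP => j; rewrite !mxE mulr1.
have w0 : (u *m P^t*) 0 i0 = 0.
  have ev1 : v1 0 i0 = \sum_j (const_mx 1 : 'rV[C]_n) 0 j * (P^t*) j i0 by rewrite /v1 mxE.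
  have evf : vf 0 i0 = \sum_j fC 0 j * (P^t*) j i0 by rewrite /vf mxE.
  rewrite ue mulmxDl -!scalemxAl !mxE -ev1 -evf /al /be.
  by case: ifP => [/andP [/eqP -> /eqP ->]|_]; ring.
have [e1 e2] := rayleigh hP hA u.
have ure : forall j, cRe (u 0 j) = cRe al + cRe be * f j.
  by move=> j; rewrite mxE ReL.
have uim : forall j, cIm (u 0 j) = cIm al + cIm be * f j.
  by move=> j; rewrite mxE ImL.
rewrite (split_qf A (fun i => cRe (u 0 i)) (fun i => cIm (u 0 i))) in e1.
rewrite (split_nf (fun i => cRe (u 0 i)) (fun i => cIm (u 0 i))) in e2.
rewrite (qf_ext A ure) (qf_ext A uim) !qaff in e1.
rewrite (nf_ext ure) (nf_ext uim) !nf_aff // in e2.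
set w := u *m P^t* in w0 e1 e2.
have ge1 : s`_1 * \sum_i (cRe (w 0 i) ^+ 2 + cIm (w 0 i) ^+ 2)
        <= \sum_i dl i * (cRe (w 0 i) ^+ 2 + cIm (w 0 i) ^+ 2).
  rewrite mulr_sumr; apply: ler_sum => i _.
  have [->|ni0] := eqVneq i i0.
    by rewrite w0 -/(nw 0) nw0 !mulr0.
  by rewrite ler_wpM2r // ?(nw_ge0 (w 0 i)) // hi0.
rewrite -e1 -e2 in ge1.
have nz : 0 < nw al + nw be.
  have [ab|ab] : al != 0 \/ be != 0.
    rewrite /al /be; case: ifP => [_|]; first by left; rewrite oner_neq0.
    have [->|r0] := eqVneq (v1 0 i0) 0; last by right; rewrite oppr_eq0.
    by rewrite andbT => /negbT r1; left.
    by apply: (lt_le_trans (nw_gt0 ab)); rewrite lerDl nw_ge0.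
  by apply: (lt_le_trans (nw_gt0 ab)); rewrite lerDr nw_ge0.
move: ge1 nz; rewrite /nw.
set Ar := cRe al; set Ai := cIm al; set Br := cRe be; set Bi := cIm be.
move=> ge1 nz.
have n0 : 0 < n%:R :> R by rewrite ltr0n; apply: ltn_trans n2.
rewrite leNgt; apply/negP => lt.
have s0 : 0 < s`_1 by apply: le_lt_trans lt.
set Q := qf A f in ge1 qfb; set N := nf f in ge1 qfb nfp.
have hA2 : 0 <= Ar ^+ 2 + Ai ^+ 2 by rewrite addr_ge0 // sqr_ge0.
have hB2 : 0 <= Br ^+ 2 + Bi ^+ 2 by rewrite addr_ge0 // sqr_ge0.
set a2 := Ar ^+ 2 + Ai ^+ 2 in hA2 nz.
set b2 := Br ^+ 2 + Bi ^+ 2 in hB2 nz.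
have key : s`_1 * (n%:R * a2 + b2 * N) <= b2 * (cst * N).
  apply: le_trans (ler_wpM2l hB2 qfb).
  have -> : s`_1 * (n%:R * a2 + b2 * N) =
     s`_1 * (n%:R * Ar ^+ 2 + Br ^+ 2 * N + (n%:R * Ai ^+ 2 + Bi ^+ 2 * N)).
    by rewrite /a2 /b2; ring.
  by apply: (le_trans ge1); rewrite /b2 le_eqVlt; apply/orP; left; apply/eqP; ring.
have [b0|b0] := eqVneq b2 0.
  rewrite b0 addr0 in nz.
  have : 0 < s`_1 * (n%:R * a2) by rewrite !mulr_gt0.
  rewrite b0 in key; lra.
have bp : 0 < b2 by rewrite lt_def b0 hB2.
have : 0 < (s`_1 - cst) * (b2 * N) by rewrite !mulr_gt0 // subr_gt0.
have : 0 <= s`_1 * (n%:R * a2) by rewrite !mulr_ge0 // ltW.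
lra.
Qed.

Lemma sum_ind1 (T : finType) (leg : pred T) (par : T -> T) (G : T -> T -> R) :
  \sum_i \sum_j (if leg i && (j == par i) then 1 else 0) * G i j
  = \sum_(i | leg i) G i (par i).
Proof.
rewrite [RHS]big_mkcond; apply: eq_bigr => i _.
case: (leg i) => /=; last by rewrite big1 // => j _; rewrite mul0r.
rewrite (bigD1 (par i)) //= eqxx mul1r big1 ?addr0 // => j /negbTE ->.
by rewrite mul0r.
Qed.

Lemma sum_ind2 (T : finType) (leg : pred T) (par : T -> T) (G : T -> T -> R) :
  \sum_i \sum_j (if leg j && (i == par j) then 1 else 0) * G i j
  = \sum_(j | leg j) G (par j) j.
Proof.
rewrite exchange_big [RHS]big_mkcond; apply: eq_bigr => j _.
case: (leg j) => /=; last by rewrite big1 // => i _; rewrite mul0r.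
rewrite (bigD1 (par j)) //= eqxx mul1r big1 ?addr0 // => i /negbTE ->.
by rewrite mul0r.
Qed.

Lemma lap_tree (T : finType) (adj : rel T) (leg : pred T) (par : T -> T) (x : T -> R) :
  (forall i j, adj i j = (leg i && (j == par i)) || (leg j && (i == par j))) ->
  (forall i, leg i -> par i != i) ->
  (forall i j, leg i -> leg j -> j == par i -> i != par j) ->
  \sum_i \sum_j x i * (if i == j then (#|[set j | adj i j]|)%:R
                        else if adj i j then -1 else 0) * x j
   = \sum_(i | leg i) (x i - x (par i)) ^+ 2.
Proof.
move=> hadj hpar hex.
pose c1 i j : R := if leg i && (j == par i) then 1 else 0.
pose c2 i j : R := if leg j && (i == par j) then 1 else 0.
have nadj : forall i, adj i i = false.
  move=> i; rewrite hadj orbb; apply/negbTE/negP => /andP [li /eqP e].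
  by move: (hpar i li); rewrite -e eqxx.
have cadj : forall i j, (if adj i j then 1 else 0) = c1 i j + c2 i j.
  move=> i j; rewrite hadj /c1 /c2.
  case h1: (leg i && (j == par i)); case h2: (leg j && (i == par j)) => //=.
    move: h1 h2 => /andP [li ej] /andP [lj ei].
    by move: (hex i j li lj ej); rewrite ei.
  by rewrite addr0.
  by rewrite add0r.
  by rewrite addr0.
have deg : forall i, (#|[set j | adj i j]|)%:R = \sum_j (c1 i j + c2 i j) :> R.
  move=> i; rewrite -sumr_const big_mkcond /=; apply: eq_bigr => j _.
  by rewrite inE -cadj.
have row : forall i, \sum_j x i * (if i == j then (#|[set j | adj i j]|)%:R
                        else if adj i j then -1 else 0) * x j
   = \sum_j (c1 i j + c2 i j) * (x i ^+ 2 - x i * x j).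
  move=> i.
  have -> : \sum_j x i * (if i == j then (#|[set j | adj i j]|)%:R
                        else if adj i j then -1 else 0) * x j
      = (#|[set j | adj i j]|)%:R * x i ^+ 2 - \sum_j (c1 i j + c2 i j) * (x i * x j).
    rewrite (bigD1 i) //= eqxx.
    have -> : \sum_j (c1 i j + c2 i j) * (x i * x j) =
              \sum_(j | j != i) (c1 i j + c2 i j) * (x i * x j).
      rewrite (bigD1 i) //= -cadj nadj mul0r add0r //.
    rewrite -sumrN; congr (_ + _); first by ring.
    apply: eq_bigr => j nj; rewrite eq_sym (negbTE nj) -cadj.
    by case: (adj i j); ring.
  rewrite deg mulr_suml -sumrB; apply: eq_bigr => j _; ring.
under eq_bigr => i _ do rewrite row.
have -> : \sum_i \sum_j (c1 i j + c2 i j) * (x i ^+ 2 - x i * x j) =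
  \sum_i \sum_j c1 i j * (x i ^+ 2 - x i * x j) +
  \sum_i \sum_j c2 i j * (x i ^+ 2 - x i * x j).
  rewrite -big_split; apply: eq_bigr => i _; rewrite -big_split.
  by apply: eq_bigr => j _; rewrite mulrDl.
rewrite (sum_ind1 leg par (fun i j => x i ^+ 2 - x i * x j)).
rewrite (sum_ind2 leg par (fun i j => x i ^+ 2 - x i * x j)).
rewrite -big_split; apply: eq_bigr => i _ /=; ring.
Qed.



Definition opar k' d (i : 'I_k'.+1) : 'I_k'.+1 := inord (parn k' d i).

Lemma parn_le k' d i : (i <= k')%N -> (parn k' d i <= k')%N.
Proof. by rewrite /parn; case: ifP => _; lia. Qed.

Lemma opar_val k' d (i : 'I_k'.+1) : val (@opar k' d i) = parn k' d i.
Proof. by rewrite /opar /= inordK // ltnS parn_le // -ltnS. Qed.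

Lemma opar_nat k' d (i : 'I_k'.+1) : nat_of_ord (@opar k' d i) = parn k' d i.
Proof. exact: opar_val. Qed.

Lemma octo_qf k' d (x : 'I_k'.+1 -> R) : (0 < d)%N ->
  qf (octo_laplacian R k'.+1 d) x = \sum_(i : 'I_k'.+1 | (i < k')%N) (x i - x (@opar k' d i)) ^+ 2.
Proof.
move=> d0; rewrite /qf.
under eq_bigr => i _ do under eq_bigr => j _ do rewrite mxE.
apply: (lap_tree (adj := octo_adj k'.+1 d)).
- by move=> i j; rewrite octo_adj_char // -!val_eqE !opar_val.
- move=> i li; rewrite -val_eqE opar_val /parn.
  have i0 : ((i %% d != 0)%N -> (0 < i)%N) by case: (val i) => //; rewrite mod0n.
  by move: i0; case: (i %% d == 0)%N => /= i0; lia.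
- move=> i j li lj; rewrite -!val_eqE !opar_val /= => /eqP ej.
  rewrite ej /parn in lj *.
  have i0 : ((i %% d != 0)%N -> (0 < i)%N) by case: (nat_of_ord i) => //; rewrite mod0n.
  move: i0 lj; case: (i %% d == 0)%N => /= i0 lj; first lia.
  case: ((i.-1) %% d == 0)%N; lia.
Qed.


Lemma cs_sum (a : nat -> R) m :
  (\sum_(0 <= q < m) a q) ^+ 2 <= m%:R * \sum_(0 <= q < m) a q ^+ 2.
Proof.
elim: m => [|m IH]; first by rewrite !big_geq // expr0n /= mul0r.
rewrite !big_nat_recr //=.
set S := \sum_(0 <= q < m) a q in IH *.
set T := \sum_(0 <= q < m) a q ^+ 2 in IH *.
have [m0|mpos] := posnP m.
  rewrite /S /T m0 !big_geq // add0r mul1r.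
  by rewrite le_eqVlt; apply/orP; left; apply/eqP; ring.
have mp : 0 < m%:R :> R by rewrite ltr0n.
have h := sqr_ge0 (S - m%:R * a m).
have T0 : 0 <= T by rewrite /T sumr_ge0 // => i _; rewrite sqr_ge0.
rewrite mulrSr.
nra.
Qed.

Lemma tel_sum (y : nat -> R) p :
  y p = \sum_(0 <= q < p.+1) (y q - (if q == 0%N then 0 else y q.-1)).
Proof.
elim: p => [|p IH]; first by rewrite big_nat1 /= subr0.
by rewrite big_nat_recr //= -IH /=; ring.
Qed.

Lemma path_ineq (y : nat -> R) d :
  \sum_(0 <= p < d) y p ^+ 2 <=
  (d%:R) ^+ 2 * \sum_(0 <= p < d) (y p - (if p == 0%N then 0 else y p.-1)) ^+ 2.
Proof.
set del := fun q => y q - (if q == 0%N then 0 else y q.-1).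
set S := \sum_(0 <= p < d) (y p - (if p == 0%N then 0 else y p.-1)) ^+ 2.
have S0 : 0 <= S by rewrite /S sumr_ge0 // => i _; rewrite sqr_ge0.
have each : forall p, (p < d)%N -> y p ^+ 2 <= d%:R * S.
  move=> p pd.
  rewrite (tel_sum y p).
  apply: le_trans (cs_sum _ _) _.
  have Sp : \sum_(0 <= q < p.+1) (y q - (if q == 0%N then 0 else y q.-1)) ^+ 2 <= S.
    rewrite /S [X in _ <= X](big_cat_nat _ (n := p.+1)) //= lerDl.
    by rewrite sumr_ge0 // => i _; rewrite sqr_ge0.
  apply: le_trans (ler_wpM2l _ Sp) _; first by rewrite ler0n.
  by rewrite ler_wpM2r // ler_nat.
apply: le_trans (ler_sum_nat (fun p pd => each p (proj2 (andP pd)))) _.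
rewrite sumr_const_nat subn0 le_eqVlt; apply/orP; left; apply/eqP.
rewrite -[in LHS]mulr_natr; ring.
Qed.


Lemma sum_leg k' (G : 'I_k'.+1 -> R) :
  \sum_(i : 'I_k'.+1 | (i < k')%N) G i = \sum_(0 <= i < k') G (inord i).
Proof.
rewrite big_mkcond big_ord_recr /= ltnn addr0 big_mkord.
apply: eq_bigr => i _.
rewrite /= ltn_ord; congr G; apply: val_inj; rewrite /= inordK //.
by apply: ltn_trans (ltn_ord i) _.
Qed.

Lemma sum_blocks (g : nat -> R) m d :
  \sum_(0 <= i < m * d) g i = \sum_(0 <= l < m) \sum_(0 <= p < d) g (l * d + p)%N.
Proof.
elim: m => [|m IH]; first by rewrite mul0n !big_geq.
rewrite mulSnr (big_cat_nat _ (n := (m * d)%N)) ?leq_addr // IH big_nat_recr //=.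
congr (_ + _); rewrite -{1}[(m * d)%N]add0n big_addn addKn; apply: eq_bigr => p _.
by rewrite addnC.
Qed.


Lemma octo_lower m d (x : 'I_(m * d).+1 -> R) : (0 < d)%N -> \sum_i x i = 0 ->
  nf x <= (d%:R) ^+ 2 *
     \sum_(i : 'I_(m * d).+1 | (i < m * d)%N) (x i - x (@opar (m * d) d i)) ^+ 2.
Proof.
move=> d0 sx.
set k' := (m * d)%N.
pose X i := x (inord i).
have xc : x ord_max = X k'.
  by rewrite /X; congr x; apply: val_inj; rewrite /= inordK.
have step1 : nf x <= \sum_(i : 'I_k'.+1 | (i < k')%N) (x i - x ord_max) ^+ 2.
  have := nf_aff (- x ord_max) 1 sx.
  have -> : nf (fun i => - x ord_max + 1 * x i) =
            \sum_(i : 'I_k'.+1 | (i < k')%N) (x i - x ord_max) ^+ 2.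
    rewrite /nf (bigD1 ord_max) //= mul1r addNr expr0n /= add0r.
    apply: eq_big => [i|i _]; last by rewrite mul1r addrC.
    by rewrite -val_eqE /= ltn_neqAle -ltnS ltn_ord andbT.
  move=> ->; rewrite expr1n mul1r lerDr.
  by rewrite mulr_ge0 // sqr_ge0.
apply: (le_trans step1).
rewrite !sum_leg xc.
have ep : forall i, (i < k')%N -> x (@opar k' d (inord i)) = X (parn k' d i).
  move=> i ik; rewrite /opar /X; congr x; congr inord.
  by rewrite inordK // ltnS ltnW.
rewrite (eq_big_nat _ _ (fun i ik => congr1 (fun t => (X i - t) ^+ 2) (ep i (proj2 (andP ik))))).
rewrite /k' !sum_blocks mulr_sumr; apply: ler_sum_nat => l /andP [_ lm].
set y := fun p => X (l * d + p)%N - X (m * d)%N.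
have e1 : \sum_(0 <= p < d) (X (l * d + p)%N - X (m * d)%N) ^+ 2 = \sum_(0 <= p < d) y p ^+ 2.
  by [].
have e2 : \sum_(0 <= p < d) (X (l * d + p)%N - X (parn (m * d) d (l * d + p))) ^+ 2
        = \sum_(0 <= p < d) (y p - (if p == 0%N then 0 else y p.-1)) ^+ 2.
  apply: eq_big_nat => p /andP [_ pd]; congr (_ ^+ 2).
  rewrite /parn /y modnMDl modn_small //.
  case: (eqVneq p 0%N) => [->|p0]; first by rewrite addn0 subr0.
  have -> : ((l * d + p).-1 = l * d + p.-1)%N by move: p0; case: p {pd} => // p _; rewrite addnS.
  ring.
rewrite e1 e2; exact: path_ineq.
Qed.


Lemma sum_ord_nat n (F : 'I_n.+1 -> R) :
  \sum_i F i = \sum_(0 <= i < n.+1) F (inord i).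
Proof.
rewrite big_mkord; apply: eq_bigr => i _; congr F.
by apply: val_inj; rewrite /= inordK.
Qed.

Lemma sum_lin d : 2 * \sum_(0 <= i < d) (i%:R + 1) = d%:R * (d%:R + 1) :> R.
Proof.
elim: d => [|d IH]; first by rewrite big_geq // mulr0 mul0r.
by rewrite big_nat_recr //= mulrDr IH mulrS; ring.
Qed.

Lemma sum_sq d : 6 * \sum_(0 <= i < d) (i%:R + 1) ^+ 2
   = d%:R * (d%:R + 1) * (2 * d%:R + 1) :> R.
Proof.
elim: d => [|d IH]; first by rewrite big_geq // mulr0 !mul0r.
by rewrite big_nat_recr //= mulrDr IH mulrS; ring.
Qed.

Lemma qf_shift k' d (f : 'I_k'.+1 -> R) a b : (0 < d)%N ->
  qf (octo_laplacian R k'.+1 d) (fun i => a + b * f i) =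
  b ^+ 2 * qf (octo_laplacian R k'.+1 d) f.
Proof.
move=> d0; rewrite !octo_qf // mulr_sumr; apply: eq_bigr => i _; ring.
Qed.


Lemma octo_upper m d : (0 < d)%N -> (0 < m)%N ->
  exists f : 'I_(m * d).+1 -> R,
   [/\ \sum_i f i = 0, 0 < nf f &
       qf (octo_laplacian R (m * d).+1 d) f <= 12 / (d%:R ^+ 2) * nf f].
Proof.
move=> d0 m0.
set k' := (m * d)%N.
have dk : (d <= k')%N by rewrite /k' leq_pmull.
pose hn (i : nat) : R := if (i < d)%N then i%:R + 1 else 0.
pose h (i : 'I_k'.+1) := hn i.
have hin : forall i, (i <= k')%N -> h (inord i) = hn i.
  by move=> i ik; rewrite /h inordK.
have hsum : forall G : R -> R, G 0 = 0 ->
    \sum_i G (h i) = \sum_(0 <= i < d) G (i%:R + 1).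
  move=> G G0; rewrite sum_ord_nat (big_cat_nat _ (n := d)) //=; last first.
    by apply: leqW.
  have z : \sum_(d <= i < k'.+1) G (h (inord i)) = 0.
    rewrite big_nat_cond big1 // => i /andP [/andP [di ik] _].
    rewrite hin; last by rewrite -ltnS.
    by rewrite /hn ltnNge di.
  rewrite z addr0; apply: eq_big_nat => i /andP [_ id]; rewrite hin; last first.
    by apply: leq_trans dk; apply: ltnW.
  by rewrite /hn id.
pose A1 := \sum_i h i.
pose A2 := \sum_i h i ^+ 2.
have eA1 : 2 * A1 = d%:R * (d%:R + 1).
  by rewrite /A1 (hsum id) // sum_lin.
have eA2 : 6 * A2 = d%:R * (d%:R + 1) * (2 * d%:R + 1).
  by rewrite /A2 (hsum (fun t => t ^+ 2)) ?expr0n // sum_sq.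
pose n : R := k'.+1%:R.
have n0 : 0 < n by rewrite ltr0n.
pose hb := A1 / n.
have hbn : hb * n = A1 by rewrite /hb divfK // gt_eqF.
exists (fun i => h i - hb).
have sf : \sum_i (h i - hb) = 0.
  by rewrite sumrB sumr_const card_ord -/A1 -mulr_natr -/n hbn subrr.
have enf : nf (fun i => h i - hb) = A2 - hb * A1.
  rewrite /nf.
  have -> : \sum_i (h i - hb) ^+ 2 = \sum_i (h i ^+ 2 - 2 * hb * h i + hb ^+ 2).
    by apply: eq_bigr => i _; ring.
  rewrite !big_split /= sumrN -mulr_sumr sumr_const card_ord -/A1 -/A2.
  have -> : hb ^+ 2 *+ k'.+1 = hb * A1 by rewrite -mulr_natr -/n -hbn; ring.
  ring.
have dR : 1 <= d%:R :> R by rewrite ler1n.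
have nd : d%:R + 1 <= n.
  by rewrite /n -natr1 lerD2r ler_nat.
have hb0 : 0 <= hb.
  rewrite /hb; apply: divr_ge0; last exact: ltW.
  rewrite /A1; apply: sumr_ge0 => i _.
  by rewrite /h /hn; case: ifP => // _; rewrite addr_ge0 ?ler0n.
have hbd : 2 * hb <= d%:R.
  have h1 : hb * (d%:R + 1) <= hb * n by rewrite ler_wpM2l.
  have d1 : 0 < d%:R + 1 :> R by apply: lt_le_trans (lt_le_trans ltr01 dR) _; rewrite lerDl.
  rewrite -(ler_pM2r d1).
  have e : 2 * hb * (d%:R + 1) = 2 * (hb * (d%:R + 1)) by ring.
  rewrite e.
  lra.
have A10 : 0 <= A1 by rewrite -hbn mulr_ge0 // ltW.
have hA : 2 * hb * A1 <= d%:R * A1 by rewrite ler_wpM2r.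
have eA1' : 2 * (d%:R * A1) = d%:R * (d%:R * (d%:R + 1)) by rewrite -eA1; ring.
have key : d%:R ^+ 3 <= 12 * (A2 - hb * A1).
  have d20 : 0 <= d%:R ^+ 2 :> R by rewrite sqr_ge0.
  have e3 : d%:R * (d%:R * (d%:R + 1)) = d%:R ^+ 3 + d%:R ^+ 2 :> R by ring.
  have e4 : d%:R * (d%:R + 1) * (2 * d%:R + 1) = 2 * d%:R ^+ 3 + 3 * d%:R ^+ 2 + d%:R :> R by ring.
  rewrite e3 in eA1'; rewrite e4 in eA2.
  have e5 : 2 * hb * A1 = 2 * (hb * A1) by ring.
  rewrite e5 in hA.
  lra.
split => //.
  have : 0 < d%:R ^+ 3 :> R by rewrite exprn_gt0 // ltr0n.
  by rewrite enf; lra.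
have -> : qf (octo_laplacian R k'.+1 d) (fun i => h i - hb) = d%:R.
  rewrite octo_qf // sum_leg.
  have E : forall i, (i < k')%N ->
      (h (inord i) - hb - (h (@opar k' d (inord i)) - hb)) ^+ 2 =
      (hn i - hn (parn k' d i)) ^+ 2.
    move=> i ik; rewrite hin; last exact: ltnW.
    have -> : h (@opar k' d (inord i)) = hn (parn k' d i).
      by rewrite /h opar_nat inordK // ltnS ltnW.
    congr (_ ^+ 2); ring.
  rewrite (eq_big_nat _ _ (fun i ik => E i (proj2 (andP ik)))).
  rewrite (big_cat_nat _ (n := d)) //=.
  have z : \sum_(d <= i < k') (hn i - hn (parn k' d i)) ^+ 2 = 0.
    rewrite big_nat_cond big1 // => i /andP [/andP [di ik] _].
    rewrite /parn; case: ifP => [_|/negbT nz].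
      by rewrite /hn ltnNge di ltnNge dk /= subrr expr0n.
    have di' : (d < i)%N.
      rewrite ltn_neqAle di andbT; apply/negP => /eqP ed.
      by move: nz; rewrite -ed modnn.
    have di2 : (d <= i.-1)%N by lia.
    by rewrite /hn ltnNge di ltnNge di2 /= subrr expr0n.
  rewrite z addr0 (eq_big_nat _ _ (F2 := fun _ => 1)) ?sumr_const_nat ?subn0 //.
  move=> i /andP [_ id]; rewrite /hn /parn id modn_small //.
  case: (eqVneq i 0%N) => [->|i0] /=; first by rewrite ltnNge dk /= subr0 add0r expr1n.
  have -> : (i.-1 < d)%N by apply: leq_ltn_trans id; apply: leq_pred.
  by case: i i0 {id} => // i _ /=; rewrite -natr1 expr2; ring.
rewrite enf mulrAC ler_pdivlMr; last by rewrite exprn_gt0 // ltr0n.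
by rewrite -exprS.
Qed.


End Spec.

Lemma octo_sym (R : realType) k d : (octo_laplacian R k d)^T = octo_laplacian R k d.
Proof.
apply/matrixP => i j; rewrite !mxE.
have [->|nij] := eqVneq i j; first by [].

by rewrite /octo_adj orbC.
Qed.

Unset Implicit Arguments.

(* lambda_2 = s`_1, the second entry of the sorted spectrum (with multiplicity). *)
Theorem lemma5 (R : realType) :
  exists c c' : R, 0 < c /\ 0 < c' /\
    forall d k : nat, (1 <= d)%N -> (2 <= k)%N -> (d %| k.-1)%N ->
      (exists s, sorted_spectrum (octo_laplacian R k d) s) /\
      (forall s, sorted_spectrum (octo_laplacian R k d) s ->
         c / (d%:R ^+ 2) <= s`_1 <= c' / (d%:R ^+ 2)).
Proof.
exists 1, 12; split => //; split; first by rewrite ltr0n.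
move=> d k d0 k2 dk.
case: k k2 dk => [//|k'] k2 dk.
have [m km] : exists m, k' = (m * d)%N by exists (k' %/ d)%N; rewrite divnK.
subst k'.
have m0 : (0 < m)%N.
  by rewrite lt0n; apply/eqP => m0; move: k2; rewrite m0 mul0n.
have As := octo_sym R (m * d).+1 d.
have n2 : (1 < (m * d).+1)%N := k2.
split.
  have [dl [P [hP hA]]] := spec_real As.
  exists (sort <=%R (map dl (enum 'I_(m * d).+1))); split.
    by apply: sort_sorted; exact: le_total.
  have ps : perm_eq (sort <=%R (map dl (enum 'I_(m * d).+1))) (map dl (enum 'I_(m * d).+1)).
    by rewrite perm_sort.
  by rewrite (char_real hP hA) (perm_big _ ps) big_map big_enum.
move=> s hs; apply/andP; split.
  apply: (lower_abstract As n2 hs) => x sx.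
  rewrite octo_qf // div1r.
  have d2 : 0 < d%:R ^+ 2 :> R by rewrite exprn_gt0 // ltr0n.
  by rewrite ler_pdivrMl //; apply: octo_lower.
have [f [sf nfp qfb]] := octo_upper R d0 m0.
apply: (upper_abstract As n2 hs _ sf nfp qfb).
  by rewrite divr_ge0 // ?ler0n // exprn_ge0 // ler0n.
by move=> a b; apply: qf_shift.
Qed.
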